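(* Let $(\Omega,\Sigma,\mu)$ be a measure space with $\mu$ a positive countably additive measure, let $\rho:\Omega\to[0,\infty)$ be measurable, and let $f,g_1,\dots,g_n,h$ be real-valued measurable functions on $\Omega$ with $\int_\Omega\rho|u|^2\,d\mu<\infty$ for each $u\in\{f,g_1,\dots,g_n,h\}$. Writing $\int_\Omega\rho uv\,d\mu$ for $\int_\Omega\rho(s)u(s)v(s)\,d\mu(s)$, we have \[ \sum_{i=1}^n\begin{vmatrix}\int_\Omega\rho fg_i\,d\mu & \int_\Omega\rho fh\,d\mu\\ \int_\Omega\rho g_ih\,d\mu & \int_\Omega\rho h^2\,d\mu\end{vmatrix}^2 \le \begin{vmatrix}\int_\Omega\rho f^2\,d\mu & \int_\Omega\rho fh\,d\mu\\ \int_\Omega\rho fh\,d\mu & \int_\Omega\rho h^2\,d\mu\end{vmatrix} \times\left\{\max_{1\le i\le n}\begin{vmatrix}\int_\Omega\rho g_i^2\,d\mu & \int_\Omega\rho g_ih\,d\mu\\ \int_\Omega\rho g_ih\,d\mu & \int_\Omega\rho h^2\,d\mu\end{vmatrix} +(n-1)\max_{1\le i\ne j\le n}\left|\begin{vmatrix}\int_\Omega\rho g_jg_i\,d\mu & \int_\Omega\rho g_jh\,d\mu\\ \int_\Omega\rho g_ih\,d\mu & \int_\Omega\rho h^2\,d\mu\end{vmatrix}\right|\right\}. \]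
   Context: $\begin{vmatrix}a&b\\c&d\end{vmatrix}=ad-bc$ denotes a $2\times2$ determinant. The maximum over $1\le i\ne j\le n$ is over all pairs $(i,j)$ with $i\ne j$. *)

(* Defs.v *)
From HB Require Import structures.
From mathcomp Require Import all_boot all_order all_algebra.
From mathcomp Require Import all_classical all_reals all_analysis.
Set Implicit Arguments. Unset Strict Implicit. Unset Printing Implicit Defensive.
Import Order.TTheory GRing.Theory Num.Theory.
Local Open Scope ring_scope.

Definition wip (d : measure_display) (T : measurableType d) (R : realType)
  (mu : {measure set T -> \bar R}) (rho u v : T -> R) : R :=
  \int[mu]_(x in [set: T]) (rho x * u x * v x).

Definition det2 (R : ringType) (a b c d : R) : R := a * d - b * c.

(* Main.v *)
Require Import Defs.
From HB Require Import structures.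
From mathcomp Require Import all_boot all_order all_algebra.
From mathcomp Require Import all_classical all_reals all_analysis.
From mathcomp Require Import ring lra measurable_realfun.
Import Order.TTheory GRing.Theory Num.Theory.
Local Open Scope ring_scope.

Section Anal.
Context d (T : measurableType d) (R : realType) (mu : {measure set T -> \bar R}) (rho : T -> R)
  (rho_meas : measurable_fun setT rho) (rho_ge0 : forall x, 0 <= rho x).

Definition L2 (u : T -> R) := measurable_fun setT u /\
  (\int[mu]_(x in [set: T]) (rho x * `|u x| ^+ 2)%:E < +oo)%E.

Lemma L2_int_sq u : L2 u -> mu.-integrable setT (EFin \o (fun x => rho x * `|u x| ^+ 2)).
Proof.
move=> [mu' fin]; apply/integrableP; split.
  apply/measurable_EFinP; apply: measurable_funM => //; apply: measurable_funX.
  exact: measurableT_comp.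
rewrite (eq_integral (fun x => (rho x * `|u x|^+2)%:E)) //.
move=> x _; rewrite gee0_abs // lee_fin mulr_ge0 // exprn_ge0 //.
Qed.

Lemma int_pair u v : L2 u -> L2 v ->
  mu.-integrable setT (EFin \o (fun x => rho x * u x * v x)).
Proof.
move=> hu hv.
apply: (@le_integrable _ _ _ mu setT measurableT _
   (EFin \o (fun x => rho x * `|u x| ^+ 2 + rho x * `|v x| ^+ 2))).
- apply/measurable_EFinP.
  apply: (measurable_funM (f := fun x => rho x * u x) (g := v)); last exact: hv.1.
  by apply: measurable_funM => //; exact: hu.1.
- move=> x _; rewrite /comp !abse_EFin lee_fin.
  rewrite [X in _ <= X]ger0_norm; last by rewrite addr_ge0 // mulr_ge0 // exprn_ge0.
  rewrite !normrM (ger0_norm (rho_ge0 x)).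
  have h1 := rho_ge0 x; have h2 := normr_ge0 (u x); have h3 := normr_ge0 (v x).
  have h4 : 0 <= rho x * (`|u x| - `|v x|)^+2 by rewrite mulr_ge0 // exprn_even_ge0.
  have h5 : 0 <= rho x * `|u x| * `|v x| by rewrite !mulr_ge0.
  nra.
- apply: (eq_integrable _ ((EFin \o (fun x => rho x * `|u x| ^+ 2)) \+ (EFin \o (fun x => rho x * `|v x| ^+ 2)))) => //.
  by apply: integrableD => //; apply: L2_int_sq.
Qed.

Lemma Rint_sum (J : Type) (s : seq J) (F : J -> T -> R) :
  (forall j, mu.-integrable setT (EFin \o F j)) ->
  mu.-integrable setT (EFin \o (fun x => \sum_(j <- s) F j x)) /\
  \int[mu]_(x in [set: T]) (\sum_(j <- s) F j x) = \sum_(j <- s) \int[mu]_(x in [set: T]) F j x.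
Proof.
move=> hF; elim: s => [|j s [ih1 ih2]].
  split.
    apply: (eq_integrable _ (cst 0%E)) => //; last exact: integrable0.
    by move=> x _; rewrite /= big_nil.
  rewrite big_nil /Rintegral (eq_integral (fun _ => 0%E)); last by move=> x _; rewrite big_nil.
  by rewrite integral0.
split.
  apply: (eq_integrable _ ((EFin \o F j) \+ (EFin \o (fun x => \sum_(j <- s) F j x)))) => //.
    by move=> x _; rewrite /= big_cons.
  by apply: integrableD.
rewrite big_cons -ih2 -RintegralD //.
by apply: eq_Rintegral => x _; rewrite big_cons.
Qed.

Lemma gram_psd (J : finType) (v : J -> T -> R) : (forall j, L2 (v j)) ->
  forall a : J -> R,
  0 <= \sum_k \sum_l a k * a l * wip mu rho (v k) (v l).
Proof.
move=> hv a.
pose u x := \sum_k a k * v k x.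
have H0 : 0 <= wip mu rho u u.
  apply: Rintegral_ge0 => x _; rewrite -mulrA mulr_ge0 //.
  by rewrite -expr2 exprn_even_ge0.
suff <- : wip mu rho u u = \sum_k \sum_l a k * a l * wip mu rho (v k) (v l) by [].
rewrite /wip (@eq_Rintegral _ _ _ mu _ (fun x => \sum_k \sum_l (a k * a l) * (rho x * v k x * v l x))); last first.
  move=> x _; rewrite /u mulr_sumr [RHS]exchange_big; apply: eq_bigr => l _.
  rewrite mulr_sumr mulr_suml; apply: eq_bigr => k _; ring.
have hint : forall k l, mu.-integrable setT (EFin \o (fun x => (a k * a l) * (rho x * v k x * v l x))).
  move=> k l; have H := integrableZl measurableT (a k * a l) (int_pair _ _ (hv k) (hv l)).
  apply: (eq_integrable measurableT _ _ _ H) => x _ /=; by rewrite EFinM.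
have hk : forall k, mu.-integrable setT (EFin \o (fun x => \sum_l (a k * a l) * (rho x * v k x * v l x))).
  by move=> k; case: (Rint_sum _ (index_enum J) (fun l x => (a k * a l) * (rho x * v k x * v l x)) (hint k)).
rewrite (Rint_sum _ _ _ hk).2; apply: eq_bigr => k _.
rewrite (Rint_sum _ _ _ (hint k)).2; apply: eq_bigr => l _.
by rewrite RintegralZl // int_pair.
Qed.

End Anal.
Section Alg.
Variables (R : realFieldType) (J : finType).

Definition Qf (M : J -> J -> R) (a b : J -> R) := \sum_k \sum_l a k * b l * M k l.

Lemma dsum_lin (X Y Z : J -> J -> R) t s :
  \sum_k \sum_l (X k l + t * Y k l + s * Z k l) =
  \sum_k \sum_l X k l + t * \sum_k \sum_l Y k l + s * \sum_k \sum_l Z k l.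
Proof.
rewrite (eq_bigr (fun k => \sum_l X k l + t * \sum_l Y k l + s * \sum_l Z k l)); last first.
  by move=> k _; rewrite !big_split /= -!mulr_sumr.
by rewrite !big_split /= -!mulr_sumr.
Qed.

Lemma discr (A C H : R) : 0 <= H -> (forall t, 0 <= A + 2 * t * C + t ^+ 2 * H) ->
  C ^+ 2 <= A * H.
Proof.
move=> H0 hq; have A0 := hq 0.
have [Hp|Hz] := boolP (0 < H).
  have := hq (- C / H); set t := - C / H => ht.
  have tH : t * H = - C by rewrite /t mulrAC -mulrA divff ?mulr1 // gt_eqF.
  have e : H * (A + 2 * t * C + t ^+ 2 * H) = A * H + 2 * (t * H) * C + (t * H) ^+ 2 by ring.
  rewrite tH in e.
  have : 0 <= H * (A + 2 * t * C + t ^+ 2 * H) by rewrite mulr_ge0 // ltW.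
  rewrite e; nra.
have H00 : H = 0 by apply/eqP; rewrite eq_le H0 andbT; rewrite ltNge negbK in Hz; exact: Hz.
rewrite H00 mulr0.
have [C0|Cn] := eqVneq C 0; first by rewrite C0 expr2 mulr0.
have := hq (- (A + 1) / (2 * C)); rewrite H00 mulr0 addr0.
have -> : 2 * (- (A + 1) / (2 * C)) * C = - (A + 1).
  by field.
lra.
Qed.

Section CSsec.
Variable M : J -> J -> R.
Hypothesis Msym : forall k l, M k l = M l k.
Hypothesis Mpsd : forall a : J -> R, 0 <= Qf M a a.

Lemma Qf_sym a b : Qf M a b = Qf M b a.
Proof.
rewrite /Qf exchange_big; apply: eq_bigr => k _; apply: eq_bigr => l _.
by rewrite Msym [a _ * _]mulrC.
Qed.

Lemma CS a b : (Qf M a b) ^+ 2 <= Qf M a a * Qf M b b.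
Proof.
apply: discr; first exact: Mpsd.
move=> t; have := Mpsd (fun k => a k + t * b k).
suff -> : Qf M (fun k => a k + t * b k) (fun k => a k + t * b k) =
   Qf M a a + 2 * t * Qf M a b + t ^+ 2 * Qf M b b by [].
rewrite /Qf.
rewrite (eq_bigr (fun k => \sum_l (a k * a l * M k l + t * (a k * b l * M k l + b k * a l * M k l)
   + t ^+ 2 * (b k * b l * M k l)))); last first.
  by move=> k _; apply: eq_bigr => l _; ring.
rewrite dsum_lin.
have -> : \sum_k \sum_l (a k * b l * M k l + b k * a l * M k l) = 2 * Qf M a b.
  rewrite (eq_bigr (fun k => \sum_l a k * b l * M k l + \sum_l b k * a l * M k l)); last first.
    by move=> k _; rewrite big_split.
  rewrite big_split /= -/(Qf M a b) -/(Qf M b a) -Qf_sym; ring.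
rewrite /Qf; ring.
Qed.

End CSsec.


Lemma delta_sum (X : J -> R) j : \sum_k (k == j)%:R * X k = X j.
Proof.
rewrite (bigD1 j) //= eqxx mul1r big1 ?addr0 // => k /negbTE ->; by rewrite mul0r.
Qed.

Lemma Qf_delta_l M j b : Qf M (fun k => (k == j)%:R) b = \sum_l b l * M j l.
Proof.
rewrite /Qf (eq_bigr (fun k => (k == j)%:R * \sum_l b l * M k l)).
  by rewrite delta_sum.
by move=> k _; rewrite mulr_sumr; apply: eq_bigr => l _; ring.
Qed.

Lemma Qf_delta_r M a j : Qf M a (fun k => (k == j)%:R) = \sum_k a k * M k j.
Proof.
rewrite /Qf; apply: eq_bigr => k _.
rewrite (eq_bigr (fun l => (l == j)%:R * (a k * M k l))).
  by rewrite delta_sum.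
by move=> l _; ring.
Qed.

Lemma bigmax0_ge (I : finType) (P : pred I) (F : I -> R) i :
  P i -> F i <= \big[Num.max/0]_(j | P j) F j.
Proof.
have : i \in index_enum I by rewrite mem_index_enum.
elim: (index_enum I) => // a r IH; rewrite inE big_cons => /orP [/eqP ->| ir] Pi.
  by rewrite Pi le_max lexx.
case: (P a); last exact: IH.
by rewrite le_max IH ?orbT.
Qed.

Lemma bigmax0_ge0 (I : finType) (P : pred I) (F : I -> R) :
  0 <= \big[Num.max/0]_(j | P j) F j.
Proof.
apply: (big_rec (fun x => 0 <= x)) => // j x _ hx; by rewrite le_max hx orbT.
Qed.

Section Main.
Variable M : J -> J -> R.
Hypothesis Msym : forall k l, M k l = M l k.
Hypothesis Mpsd : forall a : J -> R, 0 <= Qf M a a.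
Variables (ef eh : J) (n : nat) (g : 'I_n -> J).

Definition Bm k l := M k l * M eh eh - M k eh * M l eh.

Lemma Bsym k l : Bm k l = Bm l k.
Proof. by rewrite /Bm [M k l]Msym [M k eh * _]mulrC. Qed.

Lemma Bpsd a : 0 <= Qf Bm a a.
Proof.
have e : Qf Bm a a = M eh eh * Qf M a a - (\sum_k a k * M k eh) * (\sum_l a l * M l eh).
  rewrite /Qf (eq_bigr (fun k => \sum_l (0 + M eh eh * (a k * a l * M k l) +
       (-1) * ((a k * M k eh) * (a l * M l eh))))); last first.
    by move=> k _; apply: eq_bigr => l _; rewrite /Bm; ring.
  rewrite dsum_lin big1 ?add0r; last by move=> k _; rewrite big1.
  rewrite mulr_suml; congr (_ + _); rewrite mulN1r; congr (- _).
  by apply: eq_bigr => k _; rewrite mulr_sumr.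
have cs := @CS M Msym Mpsd a (fun k => (k == eh)%:R).
rewrite Qf_delta_r Qf_delta_l delta_sum in cs.
rewrite e -expr2 mulrC subr_ge0; exact: cs.
Qed.

Definition cc i := Bm ef (g i).
Definition bb k := \sum_i cc i * (k == g i)%:R.

Lemma bsum (X : J -> R) : \sum_k bb k * X k = \sum_i cc i * X (g i).
Proof.
rewrite /bb (eq_bigr (fun k => \sum_i cc i * ((k == g i)%:R * X k))); last first.
  by move=> k _; rewrite mulr_suml; apply: eq_bigr => i _; ring.
rewrite exchange_big; apply: eq_bigr => i _; by rewrite -mulr_sumr delta_sum.
Qed.

Definition maxdiag := \big[Num.max/0]_(i < n) Bm (g i) (g i).
Definition maxoff := \big[Num.max/0]_(i < n) \big[Num.max/0]_(j < n | j != i) `|Bm (g j) (g i)|.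
Definition KK := maxdiag + (n%:R - 1) * maxoff.

Lemma row_bound i : \sum_j `|Bm (g i) (g j)| <= KK.
Proof.
rewrite (bigD1 i) //= /KK; apply: lerD.
  have d0 : 0 <= Bm (g i) (g i).
    have := Bpsd (fun k => (k == g i)%:R); by rewrite Qf_delta_l delta_sum.
  rewrite ger0_norm //; exact: (@bigmax0_ge _ predT (fun i => Bm (g i) (g i)) i).
apply: (@le_trans _ _ (\sum_(j < n | j != i) maxoff)).
  apply: ler_sum => j ji; rewrite Bsym.
  apply: le_trans (@bigmax0_ge _ predT (fun i => \big[Num.max/0]_(j < n | j != i) `|Bm (g j) (g i)|) i isT).
  exact: (@bigmax0_ge _ (fun j => j != i) (fun j => `|Bm (g j) (g i)|) j ji).
rewrite sumr_const cardC1 card_ord -[maxoff *+ _]mulr_natl.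
have n1 : (1 <= n)%N by exact: (leq_ltn_trans (leq0n i) (ltn_ord i)).
by rewrite -subn1 natrB.
Qed.

Lemma main_alg :
  \sum_(i < n) (Bm ef (g i)) ^+ 2 <= Bm ef ef * KK.
Proof.
set S := \sum_(i < n) (Bm ef (g i)) ^+ 2.
set T := \sum_i cc i * \sum_j cc j * Bm (g i) (g j).
have eS : Qf Bm (fun k => (k == ef)%:R) bb = S.
  rewrite Qf_delta_l (eq_bigr (fun l => bb l * Bm ef l)) //.
  by rewrite bsum; apply: eq_bigr => i _; rewrite /cc expr2.
have eT : Qf Bm bb bb = T.
  rewrite /Qf (eq_bigr (fun k => bb k * \sum_l bb l * Bm k l)); last first.
    by move=> k _; rewrite mulr_sumr; apply: eq_bigr => l _; ring.
  rewrite bsum; apply: eq_bigr => i _; by rewrite bsum.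
have eF : Qf Bm (fun k => (k == ef)%:R) (fun k => (k == ef)%:R) = Bm ef ef.
  by rewrite Qf_delta_l delta_sum.
have cs := @CS Bm Bsym Bpsd (fun k => (k == ef)%:R) bb.
rewrite eS eT eF in cs.
have F0 : 0 <= Bm ef ef by rewrite -eF; apply: Bpsd.
have S0 : 0 <= S by apply: sumr_ge0 => i _; exact: exprn_even_ge0.
have K0 : 0 <= KK.
  rewrite /KK addr_ge0 //; first exact: bigmax0_ge0.
  have [n0|npos] := posnP n.
    suff -> : maxoff = 0 by rewrite mulr0.
    rewrite /maxoff; move: n0; clear; case: n g => // g0 _; by rewrite big_ord0.
  rewrite mulr_ge0 ?bigmax0_ge0 // subr_ge0 (ler_nat R 1 n); exact: npos.
have TK : T <= S * KK.
  have h2 : 2 * T <= 2 * (S * KK).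
    apply: (@le_trans _ _ (\sum_i \sum_j (cc i ^+ 2 * `|Bm (g i) (g j)| + cc j ^+ 2 * `|Bm (g i) (g j)|))).
      rewrite /T mulr_sumr; apply: ler_sum => i _.
      rewrite mulr_sumr mulr_sumr; apply: ler_sum => j _.
      set G := Bm (g i) (g j); set ci := cc i; set cj := cc j.
      have h1 : 0 <= (ci - cj) ^+ 2 * (`|G| + G).
        by rewrite mulr_ge0 ?exprn_even_ge0 // -lerBlDr sub0r ler_normr lexx orbT.
      have h3 : 0 <= (ci + cj) ^+ 2 * (`|G| - G).
        by rewrite mulr_ge0 ?exprn_even_ge0 // subr_ge0 ler_norm.
      nra.
    have e1 : \sum_i \sum_j (cc i ^+ 2 * `|Bm (g i) (g j)| + cc j ^+ 2 * `|Bm (g i) (g j)|)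
       = \sum_i \sum_j cc i ^+ 2 * `|Bm (g i) (g j)| + \sum_i \sum_j cc j ^+ 2 * `|Bm (g i) (g j)|.
      by rewrite -big_split; apply: eq_bigr => i _; rewrite big_split.
    have e2 : \sum_i \sum_j cc j ^+ 2 * `|Bm (g i) (g j)| = \sum_i \sum_j cc i ^+ 2 * `|Bm (g i) (g j)|.
      by rewrite exchange_big; apply: eq_bigr => i _; apply: eq_bigr => j _; rewrite Bsym.
    have e3 : \sum_i \sum_j cc i ^+ 2 * `|Bm (g i) (g j)| <= S * KK.
      rewrite /S mulr_suml; apply: ler_sum => i _; rewrite -mulr_sumr.
      by apply: ler_wpM2l; [exact: exprn_even_ge0 | exact: row_bound].
    rewrite e1 e2; lra.
  nra.
have : S ^+ 2 <= Bm ef ef * (S * KK).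
  apply: le_trans cs _; exact: ler_wpM2l.
have [Sz|Sp] := eqVneq S 0.
  by rewrite Sz; move=> _; apply: mulr_ge0.
have Spos : 0 < S by rewrite lt_def Sp S0.
rewrite expr2 mulrCA => h.
by rewrite -(ler_pM2l Spos).
Qed.

End Main.

End Alg.

Theorem proposition5p2 (d : measure_display) (T : measurableType d) (R : realType)
  (mu : {measure set T -> \bar R}) (n : nat)
  (rho f h : T -> R) (g : 'I_n -> T -> R)
  (rho_meas : measurable_fun [set: T] rho)
  (rho_ge0 : forall x, 0 <= rho x)
  (f_meas : measurable_fun [set: T] f)
  (g_meas : forall i, measurable_fun [set: T] (g i))
  (h_meas : measurable_fun [set: T] h)
  (f_L2 : (\int[mu]_(x in [set: T]) (rho x * `|f x| ^+ 2)%:E < +oo)%E)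
  (g_L2 : forall i, (\int[mu]_(x in [set: T]) (rho x * `|g i x| ^+ 2)%:E < +oo)%E)
  (h_L2 : (\int[mu]_(x in [set: T]) (rho x * `|h x| ^+ 2)%:E < +oo)%E) :
  let I := wip mu rho in
  \sum_(i < n) (det2 (I f (g i)) (I f h) (I (g i) h) (I h h)) ^+ 2
  <= det2 (I f f) (I f h) (I f h) (I h h) *
     (\big[Num.max/0]_(i < n) det2 (I (g i) (g i)) (I (g i) h) (I (g i) h) (I h h)
      + (n%:R - 1) *
        \big[Num.max/0]_(i < n) \big[Num.max/0]_(j < n | j != i)
           `| det2 (I (g j) (g i)) (I (g j) h) (I (g i) h) (I h h) |).
Proof.
pose v (k : option (option 'I_n)) :=
  match k with None => f | Some None => h | Some (Some i) => g i end.
pose M k l := wip mu rho (v k) (v l).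
have Msym : forall k l, M k l = M l k.
  by move=> k l; rewrite /M /wip; apply: eq_Rintegral => x _; rewrite mulrAC.
have hL2 : forall k, @L2 _ _ _ mu rho (v k).
  case => [[i|]|]; split => //. all: try exact: g_meas. all: try exact: g_L2.
have Mpsd : forall a : option (option 'I_n) -> R, 0 <= @Qf R _ M a a.
  by move=> a; rewrite /Qf /M; apply: gram_psd.
exact: (@main_alg _ _ M Msym Mpsd None (Some None) n (fun i => Some (Some i))).
Qed.
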